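(* Let $\varepsilon\ge0$, let $N>2$ and $J$ be integers with $0\le J<N$, let $m,M\in(0,1)$ with $m\le M$, and let $c\in[m,M]$. Define $f\colon[m,M]^{N-J}\to\mathbb{R}$ by \[ f(a_1,\dots,a_{N-J})=\Big(e^{\varepsilon}-(e^{\varepsilon}-1)\frac{m+Jc+S}{N+1}\Big)\prod_{i=1}^{N-J}\Bigg(N+\frac{1-a_i}{1-\frac{\min\{m+(N-1)M,\ (N-2)(a_i-m)+Jc+S\}}{N}}\Bigg), \] where $S=\sum_{i=1}^{N-J}a_i$. Then for all $(a_1,\dots,a_{N-J})\in[m,M]^{N-J}$, \[ f(a_1,\dots,a_{N-J})\le\max\Big\{\max_{t\in[m,U_{N-J-1}]}f_{\mathrm{diag}}(t),\ \max_{k\in\{0,1,\dots,N-J\}}\max_{t\in[m,U_k]}f_k(t)\Big\}, \] where \[ f_{\mathrm{diag}}(t)=\Big(e^{\varepsilon}-(e^{\varepsilon}-1)\frac{m+Jc+(N-J)t}{N+1}\Big)\Bigg(N+\frac{1-t}{1-\frac{(2N-J-2)t-(N-2)m+Jc}{N}}\Bigg)^{N-J}, \] and, for $k\in\{0,1,\dots,N-J\}$, \[ f_k(t)=\Big(e^{\varepsilon}-(e^{\varepsilon}-1)\frac{m+S_k(t)}{N+1}\Big)\Bigg(N+\frac{1-t}{1-\frac{(N-2)(t-m)+S_k(t)}{N}}\Bigg)\Bigg(N+\frac{1-m}{1-\frac{S_k(t)}{N}}\Bigg)^{N-J-k-1}\Bigg(N+\frac{1-B_k(t)}{1-\frac{m+(N-1)M}{N}}\Bigg)^{k},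 \] with $S_k(t)=Jc+t+(N-J-k-1)m+kB_k(t)$, \[ B_k(t)=\frac{(N-1)(M+m)-(Jc+(N-J-k-1)m+t)}{N+k-2},\qquad U_k=\frac{(N-1)(M+m)-(Jc+(N-J-k-1)m)}{N+k-1}. \] *)

(* Defs.v *)
From Stdlib Require Import Reals Lra Lia.
Open Scope R_scope.

Fixpoint prodR (n : nat) (f : nat -> R) : R :=
  match n with
  | O => 1
  | S n' => prodR n' f * f n'
  end.

Fixpoint sumR (n : nat) (f : nat -> R) : R :=
  match n with
  | O => 0
  | S n' => sumR n' f + f n'
  end.

Section P9.
Variables (eps : R) (N J : nat) (m M c : R).

Let NR := INR N.
Let JR := INR J.
Let nJ := (N - J)%nat.

(* the function f on [m,M]^{N-J}; coordinates a_1..a_{N-J} are a 0 .. a (N-J-1) *)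
Definition f9 (a : nat -> R) : R :=
  let S := sumR nJ a in
  (exp eps - (exp eps - 1) * ((m + JR * c + S) / (NR + 1))) *
  prodR nJ (fun i =>
    NR + (1 - a i) /
         (1 - Rmin (m + (NR - 1) * M) ((NR - 2) * (a i - m) + JR * c + S) / NR)).

Definition fdiag9 (t : R) : R :=
  (exp eps - (exp eps - 1) * ((m + JR * c + INR nJ * t) / (NR + 1))) *
  (NR + (1 - t) /
        (1 - ((2 * NR - JR - 2) * t - (NR - 2) * m + JR * c) / NR)) ^ nJ.

Definition B9 (k : nat) (t : R) : R :=
  ((NR - 1) * (M + m) - (JR * c + (INR nJ - INR k - 1) * m + t)) /
  (NR + INR k - 2).

Definition U9 (k : nat) : R :=
  ((NR - 1) * (M + m) - (JR * c + (INR nJ - INR k - 1) * m)) /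
  (NR + INR k - 1).

Definition S9 (k : nat) (t : R) : R :=
  JR * c + t + (INR nJ - INR k - 1) * m + INR k * B9 k t.

(* the exponent N-J-k-1 may equal -1 (k = N-J), hence an integer power *)
Definition fk9 (k : nat) (t : R) : R :=
  (exp eps - (exp eps - 1) * ((m + S9 k t) / (NR + 1))) *
  (NR + (1 - t) / (1 - ((NR - 2) * (t - m) + S9 k t) / NR)) *
  powerRZ (NR + (1 - m) / (1 - S9 k t / NR))
          (Z.of_nat nJ - Z.of_nat k - 1)%Z *
  (NR + (1 - B9 k t) / (1 - (m + (NR - 1) * M) / NR)) ^ k.

End P9.

(* Main.v *)
Require Import Defs.
From Stdlib Require Import Reals Lra Lia.
Open Scope R_scope.

Lemma prodR_ext n f g : (forall i, (i < n)%nat -> f i = g i) -> prodR n f = prodR n g.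
Proof. induction n; simpl; intros H; auto. rewrite IHn by (intros; apply H; lia). rewrite H by lia. auto. Qed.

Lemma sumR_ext n f g : (forall i, (i < n)%nat -> f i = g i) -> sumR n f = sumR n g.
Proof. induction n; simpl; intros H; auto. rewrite IHn by (intros; apply H; lia). rewrite H by lia. auto. Qed.

Lemma prodR_nonneg n f : (forall i, (i < n)%nat -> 0 <= f i) -> 0 <= prodR n f.
Proof. induction n; simpl; intros H; [lra|]. apply Rmult_le_pos. apply IHn; intros; apply H; lia. apply H; lia. Qed.

Lemma prodR_le n f g : (forall i, (i < n)%nat -> 0 <= f i <= g i) -> prodR n f <= prodR n g.
Proof. induction n; simpl; intros H; [lra|]. apply Rmult_le_compat.
 apply prodR_nonneg; intros; apply H; lia. apply H; lia. apply IHn; intros; apply H; lia. apply H; lia. Qed.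

Lemma sumR_lin n al be g : sumR n (fun i => al + be * g i) = INR n * al + be * sumR n g.
Proof. induction n; simpl sumR. simpl; ring. rewrite IHn, S_INR; ring. Qed.

Lemma amgm_exp n Y L : 0 < Y -> (forall i, (i < n)%nat -> 0 <= L i) ->
  prodR n L <= Y ^ n * exp (sumR n L / Y - INR n).
Proof.
 intros HY. induction n; cbn [prodR sumR pow]; intros H.
 - replace (0/Y - INR 0) with 0 by (simpl; field; lra). rewrite exp_0; lra.
 - assert (H1 : L n <= Y * exp (L n / Y - 1)).
   { pose proof (exp_ineq1_le (L n / Y - 1)).
     replace (L n) with (Y * (1 + (L n / Y - 1))) at 1 by (field; lra).
     apply Rmult_le_compat_l; lra. }
   replace ((sumR n L + L n) / Y - INR (S n)) with ((sumR n L / Y - INR n) + (L n / Y - 1))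
     by (rewrite S_INR; field; lra).
   rewrite exp_plus.
   replace (Y * Y ^ n * (exp (sumR n L / Y - INR n) * exp (L n / Y - 1))) with
     ((Y ^ n * exp (sumR n L / Y - INR n)) * (Y * exp (L n / Y - 1))) by ring.
   apply Rmult_le_compat. apply prodR_nonneg; intros; apply H; lia. apply H; lia.
   apply IHn; intros; apply H; lia. exact H1.
Qed.

Lemma amgm n Y L : 0 < Y -> (forall i, (i < n)%nat -> 0 <= L i) -> sumR n L = INR n * Y ->
  prodR n L <= Y ^ n.
Proof. intros HY H Hs. eapply Rle_trans. apply amgm_exp; eauto.
 rewrite Hs. replace (INR n * Y / Y - INR n) with 0 by (field; lra). rewrite exp_0; lra. Qed.

Lemma spread (psi : R -> R) lo hi :
  lo <= hi ->
  (forall x, lo <= x <= hi -> 0 <= psi x) ->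
  (forall x y, lo <= x <= hi -> lo <= y <= hi -> x + y - lo <= hi ->
      psi x * psi y <= psi (x + y - lo) * psi lo) ->
  (forall x y, lo <= x <= hi -> lo <= y <= hi -> lo <= x + y - hi ->
      psi x * psi y <= psi hi * psi (x + y - hi)) ->
  forall n b, (forall i, (i < S n)%nat -> lo <= b i <= hi) ->
  exists t p q, (p + q = n)%nat /\ lo <= t <= hi /\
    t + INR p * lo + INR q * hi = sumR (S n) b /\
    prodR (S n) (fun i => psi (b i)) <= psi t * psi lo ^ p * psi hi ^ q.
Proof.
 intros Hlh Hpos H1 H2. induction n; intros b Hb.
 - exists (b 0%nat), 0%nat, 0%nat. simpl. split; [lia|]. split. apply Hb; lia. split; lra.
 - destruct (IHn b) as (t & p & q & Hpq & Ht & Hs & Hp). intros; apply Hb; lia.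
   assert (Hbn : lo <= b (S n) <= hi) by (apply Hb; lia).
   assert (HP0 : 0 <= psi lo ^ p * psi hi ^ q).
   { apply Rmult_le_pos; apply pow_le; apply Hpos; lra. }
   change (prodR (S (S n)) (fun i => psi (b i))) with (prodR (S n) (fun i => psi (b i)) * psi (b (S n))).
   change (sumR (S (S n)) b) with (sumR (S n) b + b (S n)).
   destruct (Rle_dec (t + b (S n) - lo) hi) as [Hc|Hc].
   + exists (t + b (S n) - lo), (S p), q. split; [lia|]. split; [lra|]. split.
     rewrite S_INR; lra.
     eapply Rle_trans. apply Rmult_le_compat_r. apply Hpos; lra. exact Hp.
     specialize (H1 t (b (S n)) Ht Hbn Hc).
     replace (psi t * psi lo ^ p * psi hi ^ q * psi (b (S n))) with ((psi t * psi (b (S n))) * (psi lo ^ p * psi hi ^ q)) by ring.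
     replace (psi (t + b (S n) - lo) * psi lo ^ S p * psi hi ^ q) with ((psi (t + b (S n) - lo) * psi lo) * (psi lo ^ p * psi hi ^ q)) by (simpl; ring).
     apply Rmult_le_compat_r; auto.
   + exists (t + b (S n) - hi), p, (S q). split; [lia|]. split; [lra|]. split.
     rewrite S_INR; lra.
     eapply Rle_trans. apply Rmult_le_compat_r. apply Hpos; lra. exact Hp.
     specialize (H2 t (b (S n)) Ht Hbn ltac:(lra)).
     replace (psi t * psi lo ^ p * psi hi ^ q * psi (b (S n))) with ((psi t * psi (b (S n))) * (psi lo ^ p * psi hi ^ q)) by ring.
     replace (psi (t + b (S n) - hi) * psi lo ^ p * psi hi ^ S q) with ((psi hi * psi (t + b (S n) - hi)) * (psi lo ^ p * psi hi ^ q)) by (simpl; ring).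
     apply Rmult_le_compat_r; auto.
Qed.

Definition Den (N m T z : R) := N - (N-2)*(z-m) - T.
Definition pu (N m T z : R) := N + (1 - z)/(1 - ((N-2)*(z-m)+T)/N).

Lemma pu_eq N m T z : 0 < N -> 0 < Den N m T z -> pu N m T z = N * ((Den N m T z + 1 - z) / Den N m T z).
Proof. unfold pu, Den; intros. assert (E: 1 - ((N-2)*(z-m)+T)/N = (N - (N - 2) * (z - m) - T)/N) by (field; lra).
 rewrite E. field. lra. Qed.

Lemma pu_tangent N m T z t : 2 < N -> 0 < Den N m T z -> 0 < Den N m T t -> T <= 2 + (N-2)*m ->
  pu N m T z <= pu N m T t + (N*(T-2-(N-2)*m)/(Den N m T t)^2)*(z-t).
Proof.
 intros HN Hz Ht HT. rewrite !pu_eq by lra.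
 set (a := Den N m T z) in *. set (b := Den N m T t) in *.
 assert (E: N * ((b + 1 - t) / b) + N * (T - 2 - (N - 2) * m) / b ^ 2 * (z - t) - N * ((a + 1 - z) / a)
   = N*(2+(N-2)*m-T)*(N-2)*(z-t)^2/(b^2*a)).
 { unfold a, b, Den. field. unfold a,b,Den in Hz, Ht. split; lra. }
 assert (0 <= N*(2+(N-2)*m-T)*(N-2)*(z-t)^2/(b^2*a)).
 { apply Rmult_le_pos. apply Rmult_le_pos. apply Rmult_le_pos. apply Rmult_le_pos; lra. lra. apply pow2_ge_0.
   apply Rlt_le, Rinv_0_lt_compat. apply Rmult_lt_0_compat; auto. apply pow_lt; auto. }
 lra.
Qed.

Lemma pu_lower N m T z : 2 < N -> 0 < Den N m T z -> 2 + (N-2)*m <= T ->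
  N*(N-1)/(N-2) <= pu N m T z.
Proof.
 intros HN Hz HT. rewrite pu_eq by lra. set (a := Den N m T z) in *.
 assert (E: N * ((a + 1 - z) / a) - N*(N-1)/(N-2) = N*(T-2-(N-2)*m)/((N-2)*a)).
 { unfold a, Den. field. unfold a, Den in Hz. split; lra. }
 assert (0 <= N*(T-2-(N-2)*m)/((N-2)*a)).
 { apply Rmult_le_pos. apply Rmult_le_pos; lra. apply Rlt_le, Rinv_0_lt_compat. apply Rmult_lt_0_compat; lra. }
 lra.
Qed.

Lemma pu_mono N m T x y : 2 < N -> 0 < Den N m T x -> 0 < Den N m T y -> 2 + (N-2)*m <= T -> x <= y ->
  pu N m T x <= pu N m T y.
Proof.
 intros HN Hx Hy HT Hxy. rewrite !pu_eq by lra.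
 set (a := Den N m T x) in *. set (b := Den N m T y) in *.
 assert (E: N * ((b + 1 - y) / b) - N * ((a + 1 - x) / a) = N*(y-x)*(T-2-(N-2)*m)/(a*b)).
 { unfold a, b, Den. field. unfold a, b, Den in Hx, Hy. split; lra. }
 assert (0 <= N*(y-x)*(T-2-(N-2)*m)/(a*b)).
 { apply Rmult_le_pos. apply Rmult_le_pos. apply Rmult_le_pos; lra. lra. apply Rlt_le, Rinv_0_lt_compat. apply Rmult_lt_0_compat; lra. }
 lra.
Qed.

Lemma pu_two N m T x y d : 2 < N -> 2 + (N-2)*m <= T -> x <= y -> 0 <= d ->
  0 < Den N m T (x-d) -> 0 < Den N m T (y+d) ->
  pu N m T x * pu N m T y <= pu N m T (x-d) * pu N m T (y+d).
Proof.
 intros HN HT Hxy Hd H1 H2.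
 assert (Hx : 0 < Den N m T x) by (unfold Den in *; nra).
 assert (Hy : 0 < Den N m T y) by (unfold Den in *; nra).
 pose proof (pu_lower N m T x HN Hx HT) as Lx.
 pose proof (pu_lower N m T y HN Hy HT) as Ly.
 rewrite !pu_eq in * by lra.
 set (a1 := Den N m T x) in *. set (a2 := Den N m T y) in *.
 set (b1 := Den N m T (x-d)) in *. set (b2 := Den N m T (y+d)) in *.
 set (u := d*(y-x+d)).
 assert (Eb : b1*b2 = a1*a2 - (N-2)^2*u) by (unfold b1,b2,a1,a2,u,Den; ring).
 assert (En : (b1 + 1 - (x-d))*(b2 + 1 - (y+d)) = (a1+1-x)*(a2+1-y) - (N-1)^2*u) by (unfold b1,b2,a1,a2,u,Den; ring).
 assert (Hu : 0 <= u) by (unfold u; nra).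
 set (n1 := a1+1-x) in *. set (n2 := a2+1-y) in *.
 assert (K1 : (N-1)*a1 <= (N-2)*n1).
 { assert (N*(N-1)/(N-2) * a1 <= N*(n1/a1)*a1) by (apply Rmult_le_compat_r; lra).
   replace (N*(n1/a1)*a1) with (N*n1) in H by (field; lra).
   assert (N*(N-1)/(N-2)*a1*(N-2) <= N*n1*(N-2)) by (apply Rmult_le_compat_r; lra).
   replace (N*(N-1)/(N-2)*a1*(N-2)) with (N*((N-1)*a1)) in H0 by (field; lra). nra. }
 assert (K2 : (N-1)*a2 <= (N-2)*n2).
 { assert (N*(N-1)/(N-2) * a2 <= N*(n2/a2)*a2) by (apply Rmult_le_compat_r; lra).
   replace (N*(n2/a2)*a2) with (N*n2) in H by (field; lra).
   assert (N*(N-1)/(N-2)*a2*(N-2) <= N*n2*(N-2)) by (apply Rmult_le_compat_r; lra).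
   replace (N*(N-1)/(N-2)*a2*(N-2)) with (N*((N-1)*a2)) in H0 by (field; lra). nra. }
 assert (K : (N-1)^2*(a1*a2) <= (N-2)^2*(n1*n2)).
 { assert (0 <= (N-1)*a1) by nra. assert (0 <= (N-1)*a2) by nra.
   assert (((N-1)*a1)*((N-1)*a2) <= ((N-2)*n1)*((N-2)*n2)) by (apply Rmult_le_compat; lra). nra. }
 set (n1' := b1 + 1 - (x-d)) in *. set (n2' := b2 + 1 - (y+d)) in *.
 replace (N*(n1/a1)*(N*(n2/a2))) with (N^2*(n1*n2)/(a1*a2)) by (field; lra).
 replace (N*(n1'/b1)*(N*(n2'/b2))) with (N^2*(n1'*n2')/(b1*b2)) by (field; lra).
 apply (Rmult_le_reg_r (a1*a2*(b1*b2))). apply Rmult_lt_0_compat; apply Rmult_lt_0_compat; lra.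
 replace (N^2*(n1*n2)/(a1*a2)*(a1*a2*(b1*b2))) with (N^2*(n1*n2)*(b1*b2)) by (field; lra).
 replace (N^2*(n1'*n2')/(b1*b2)*(a1*a2*(b1*b2))) with (N^2*(n1'*n2')*(a1*a2)) by (field; lra).
 rewrite Eb, En.
 assert (0 <= N^2*u*((N-2)^2*(n1*n2) - (N-1)^2*(a1*a2))).
 { apply Rmult_le_pos. apply Rmult_le_pos. nra. lra. lra. }
 nra.
Qed.

Lemma sumR_bounds n a lo hi : (forall i, (i < n)%nat -> lo <= a i <= hi) ->
  INR n * lo <= sumR n a <= INR n * hi.
Proof. induction n; intros H; cbn [sumR]. simpl; lra.
 rewrite S_INR. destruct IHn. intros; apply H; lia. assert (lo <= a n <= hi) by (apply H; lia). lra. Qed.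

Lemma sumR_add n f g : sumR n (fun i => f i + g i) = sumR n f + sumR n g.
Proof. induction n; cbn [sumR]. lra. rewrite IHn; ring. Qed.
Lemma sumR_scal n k f : sumR n (fun i => k * f i) = k * sumR n f.
Proof. induction n; cbn [sumR]. ring. rewrite IHn; ring. Qed.
Lemma sumR_nonneg n f : (forall i, (i < n)%nat -> 0 <= f i) -> 0 <= sumR n f.
Proof. induction n; cbn [sumR]; intros H. lra. assert (0 <= f n) by (apply H; lia).
 assert (0 <= sumR n f) by (apply IHn; intros; apply H; lia). lra. Qed.

Theorem proposition9 (eps : R) (N J : nat) (m M c : R) (a : nat -> R) :
  0 <= eps -> (2 < N)%nat -> (J < N)%nat ->
  0 < m < 1 -> 0 < M < 1 -> m <= M -> m <= c <= M ->
  (forall i, (i < N - J)%nat -> m <= a i <= M) ->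
  (exists t, m <= t <= U9 N J m M c (N - J - 1) /\
             f9 eps N J m M c a <= fdiag9 eps N J m c t) \/
  (exists k t, (k <= N - J)%nat /\ m <= t <= U9 N J m M c k /\
             f9 eps N J m M c a <= fk9 eps N J m M c k t).
Proof.
 intros Heps HN HJ Hm HM HmM Hc Ha.
 pose (n := (N - J)%nat).
 pose (NR := INR N). pose (JR := INR J).
 assert (HNR : 3 <= NR) by (unfold NR; replace 3 with (INR 3) by (simpl; lra); apply le_INR; lia).
 assert (HJR : 0 <= JR) by (unfold JR; apply pos_INR).
 assert (HnR : INR n = NR - JR) by (unfold n, NR, JR; apply minus_INR; lia).
 assert (Hn1 : 1 <= INR n) by (replace 1 with (INR 1) by reflexivity; apply le_INR; unfold n; lia).
 pose (S := sumR n a).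
 assert (HS : INR n * m <= S <= INR n * M) by (apply sumR_bounds; exact Ha).
 pose (A := JR * c).
 assert (HA : JR * m <= A <= JR * M) by (unfold A; split; apply Rmult_le_compat_l; lra).
 pose (T := A + S).
 pose (D0 := m + (NR - 1) * M).
 assert (HD0 : D0 < NR) by (unfold D0; nra).
 pose (D := 1 - D0 / NR).
 assert (HDe : NR * D = NR - D0) by (unfold D; field; lra).
 assert (HD : 0 < D) by (unfold D; apply Rlt_0_minus; apply (Rmult_lt_reg_r NR); [lra|]; field_simplify; lra).
 pose (E := exp eps).
 assert (HE : 1 <= E) by (unfold E; rewrite <- exp_0; destruct Heps as [H|H]; [apply Rlt_le, exp_increasing; lra| rewrite <- H; lra]).
 pose (P := E - (E - 1) * ((m + JR * c + S) / (NR + 1))).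
 pose (psi := fun z => NR + (1 - z) / (1 - Rmin D0 ((NR - 2) * (z - m) + JR * c + S) / NR)).
 assert (F0 : f9 eps N J m M c a = P * prodR n (fun i => psi (a i))) by reflexivity.
 assert (HP : 0 < P).
 { unfold P. assert ((m + JR * c + S) / (NR + 1) <= 1).
   { apply (Rmult_le_reg_r (NR+1)); [lra|]. field_simplify; [|lra].
     assert (JR * c + S <= NR * M) by (unfold A in HA; nra). nra. }
   nra. }
 assert (Hpsi_den : forall z, D <= 1 - Rmin D0 ((NR - 2) * (z - m) + JR * c + S) / NR).
 { intros z. unfold D. pose proof (Rmin_l D0 ((NR - 2) * (z - m) + JR * c + S)).
   assert (Rmin D0 ((NR - 2) * (z - m) + JR * c + S) / NR <= D0 / NR) by (apply Rmult_le_compat_r; [apply Rlt_le, Rinv_0_lt_compat; lra | lra]).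
   lra. }
 assert (Hpsi_pos : forall z, z <= 1 -> NR <= psi z).
 { intros z Hz. unfold psi. assert (0 <= (1 - z) / (1 - Rmin D0 ((NR - 2) * (z - m) + JR * c + S) / NR)).
   { apply Rmult_le_pos. lra. apply Rlt_le, Rinv_0_lt_compat. pose proof (Hpsi_den z). lra. }
   lra. }
 assert (Hpsi_cap : forall z, z <= 1 -> psi z <= NR + (1 - z) / D).
 { intros z Hz. unfold psi. apply Rplus_le_compat_l. apply Rmult_le_compat_l. lra.
   apply Rinv_le_contravar. lra. apply Hpsi_den. }
 assert (Hpsi_capeq : forall z, D0 <= (NR - 2) * (z - m) + JR * c + S -> psi z = NR + (1 - z) / D).
 { intros z Hz. unfold psi. rewrite Rmin_left by lra. reflexivity. }
 assert (Hpsi_unc : forall z, (NR - 2) * (z - m) + JR * c + S <= D0 -> psi z = pu NR m T z).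
 { intros z Hz. unfold psi, pu, T, A. rewrite Rmin_right by lra. do 4 f_equal. ring. }
 assert (Hn1' : INR (N - J - 1) = INR n - 1).
 { unfold n. rewrite minus_INR by lia. reflexivity. }
 pose (U := U9 N J m M c (N - J - 1)).
 assert (HUd : 0 < 2 * NR - JR - 2) by lra.
 assert (HU : U = ((NR - 1) * (M + m) - JR * c) / (2 * NR - JR - 2)).
 { unfold U, U9. fold NR JR. rewrite Hn1'. change (INR (N - J)) with (INR n). rewrite HnR. f_equal; ring. }
 assert (HUm : m <= U).
 { rewrite HU. apply (Rmult_le_reg_r (2 * NR - JR - 2)); [lra|]. field_simplify; [|lra].
   assert (JR * c <= JR * M) by (apply Rmult_le_compat_l; lra). nra. }
 assert (HUe : (2 * NR - JR - 2) * U - (NR - 2) * m + JR * c = D0).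
 { rewrite HU. unfold D0. field. lra. }
 pose (t0 := S / INR n).
 assert (Ht0 : INR n * t0 = S) by (unfold t0; field; lra).
 assert (Ht0m : m <= t0 <= M) by (split; apply (Rmult_le_reg_l (INR n)); lra).
 destruct (Rlt_le_dec U t0) as [C1|C1].
 {
   left. exists U. split. change (m <= U <= U). split; lra.
   rewrite F0.
   pose (Y := NR + (1 - t0) / D). pose (YU := NR + (1 - U) / D).
   assert (HY : NR <= Y) by (unfold Y; assert (0 <= (1-t0)/D) by (apply Rmult_le_pos; [lra| apply Rlt_le, Rinv_0_lt_compat; lra]); lra).
   assert (HYU : Y <= YU) by (unfold Y, YU; apply Rplus_le_compat_l; apply Rmult_le_compat_r; [apply Rlt_le, Rinv_0_lt_compat; lra| lra]).
   assert (Hprod : prodR n (fun i => psi (a i)) <= Y ^ n).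
   { apply Rle_trans with (prodR n (fun i => (NR + 1 / D) + (- (1 / D)) * a i)).
     - apply prodR_le. intros i Hi. pose proof (Ha i Hi). split. pose proof (Hpsi_pos (a i)). lra.
       replace ((NR + 1 / D) + (- (1 / D)) * a i) with (NR + (1 - a i) / D) by (field; lra). apply Hpsi_cap; lra.
     - apply amgm. lra. intros i Hi. pose proof (Ha i Hi).
       replace ((NR + 1 / D) + (- (1 / D)) * a i) with (NR + (1 - a i) / D) by (field; lra).
       assert (0 <= (1 - a i) / D) by (apply Rmult_le_pos; [lra| apply Rlt_le, Rinv_0_lt_compat; lra]). lra.
       rewrite sumR_lin. fold S. unfold Y. rewrite <- Ht0. field. lra. }
   assert (HPU : P <= E - (E - 1) * ((m + JR * c + INR n * U) / (NR + 1))).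
   { unfold P. assert ((m + JR * c + INR n * U) / (NR + 1) <= (m + JR * c + S) / (NR + 1)).
     { apply Rmult_le_compat_r. apply Rlt_le, Rinv_0_lt_compat; lra. rewrite <- Ht0. nra. }
     nra. }
   unfold fdiag9. fold NR JR n E. rewrite HUe. fold D. fold YU.
   apply Rle_trans with (P * YU ^ n).
   apply Rmult_le_compat_l. lra. eapply Rle_trans. exact Hprod. apply pow_incr. lra.
   apply Rmult_le_compat_r. apply pow_le. lra. exact HPU. }
 assert (HX0 : (NR - 2) * (t0 - m) + JR * c + S <= D0).
 { assert ((2 * NR - JR - 2) * t0 <= (2 * NR - JR - 2) * U) by (apply Rmult_le_compat_l; lra).
   rewrite <- Ht0, HnR. rewrite HnR in Ht0. nra. }
 pose (th := m + (D0 - T) / (NR - 2)).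
 assert (HXth : forall z, (NR - 2) * (z - m) + JR * c + S - D0 = (NR - 2) * (z - th)).
 { intros z. unfold th, T, A. field. lra. }
 assert (Ht0th : t0 <= th) by (pose proof (HXth t0); nra).
 assert (HDen : forall z, z <= th -> NR - D0 <= Den NR m T z).
 { intros z Hz. pose proof (HXth z). unfold Den, T, A. nra. }
 assert (Hputh : pu NR m T th = NR + (1 - th) / D).
 { unfold pu, D. replace ((NR - 2) * (th - m) + T) with D0. reflexivity. pose proof (HXth th). unfold T, A. lra. }
 assert (Hpsi_eq_pu : forall z, z <= th -> psi z = pu NR m T z).
 { intros z Hz. apply Hpsi_unc. pose proof (HXth z). nra. }
 assert (Hpsi_capth : forall z, th <= z -> psi z = NR + (1 - z) / D).
 { intros z Hz. apply Hpsi_capeq. pose proof (HXth z). nra. }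
 assert (Hfd : fdiag9 eps N J m c t0 = P * (pu NR m T t0) ^ n).
 { unfold fdiag9. fold NR JR n E. rewrite Ht0. f_equal. unfold pu. do 5 f_equal.
   unfold T, A. rewrite <- Ht0, HnR. ring. }
 destruct (Rle_lt_dec T (2 + (NR - 2) * m)) as [C2|C2].
 {
   left. exists t0. split. change (m <= t0 <= U). split; lra. rewrite F0, Hfd.
   apply Rmult_le_compat_l. lra.
   pose (sl := NR * (T - 2 - (NR - 2) * m) / (Den NR m T t0) ^ 2).
   assert (Hq : NR - D0 <= Den NR m T t0) by (apply HDen; lra).
   assert (Hpt : forall z, z <= th -> pu NR m T z <= pu NR m T t0 + sl * (z - t0)).
   { intros z Hz. apply pu_tangent; try lra. pose proof (HDen z Hz); lra. }
   assert (Hpt0 : NR <= pu NR m T t0) by (rewrite <- Hpsi_eq_pu by lra; apply Hpsi_pos; lra).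
   assert (Hpoint : forall i, (i < n)%nat -> psi (a i) <= pu NR m T t0 + sl * (a i - t0)).
   { intros i Hi. pose proof (Ha i Hi) as Hai. destruct (Rle_lt_dec (a i) th) as [C|C].
     - rewrite Hpsi_eq_pu by lra. apply Hpt; lra.
     - rewrite Hpsi_capth by lra.
       assert (Hsl : - (1 / D) <= sl).
       { pose (q := Den NR m T t0). fold q in Hq. pose (e0 := NR - D0). fold e0 in Hq.
         assert (He0 : 0 < e0) by (unfold e0; lra).
         assert (Hlam : - (T - 2 - (NR - 2) * m) <= e0).
         { pose proof (HXth (a i)). assert (0 < (NR - 2) * (a i - th)) by (apply Rmult_lt_0_compat; lra).
           assert ((NR - 2) * a i < (NR - 2) * 1) by (apply Rmult_lt_compat_l; lra).
           unfold e0, T, A. unfold T, A in C2. lra. }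
         assert (1 / D = NR / e0) by (unfold e0; rewrite <- HDe; field; lra).
         rewrite H. unfold sl. fold q.
         assert (- (T - 2 - (NR - 2) * m) * e0 <= q ^ 2).
         { assert (- (T - 2 - (NR - 2) * m) * e0 <= e0 * e0) by (apply Rmult_le_compat_r; lra).
           assert (e0 * e0 <= q * q) by (apply Rmult_le_compat; lra). simpl; lra. }
         assert (0 < q) by lra.
         apply (Rmult_le_reg_r (e0 * q ^ 2)). apply Rmult_lt_0_compat. lra. apply pow_lt; lra.
         replace (- (NR / e0) * (e0 * q ^ 2)) with (- NR * q ^ 2) by (field; lra).
         replace (NR * (T - 2 - (NR - 2) * m) / q ^ 2 * (e0 * q ^ 2)) with (NR * ((T - 2 - (NR - 2) * m) * e0)) by (field; lra).
         assert (NR * (- q ^ 2) <= NR * ((T - 2 - (NR - 2) * m) * e0)) by (apply Rmult_le_compat_l; lra).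
         lra. }
       assert (pu NR m T th <= pu NR m T t0 + sl * (th - t0)) by (apply Hpt; lra).
       assert (- (1 / D) * (a i - th) <= sl * (a i - th)) by (apply Rmult_le_compat_r; lra).
       replace (NR + (1 - a i) / D) with (pu NR m T th + - (1 / D) * (a i - th)) by (rewrite Hputh; field; lra).
       lra. }
   apply Rle_trans with (prodR n (fun i => (pu NR m T t0 - sl * t0) + sl * a i)).
   - apply prodR_le. intros i Hi. pose proof (Ha i Hi). split. pose proof (Hpsi_pos (a i)). lra.
     pose proof (Hpoint i Hi). lra.
   - apply amgm. lra. intros i Hi. pose proof (Ha i Hi). pose proof (Hpoint i Hi). pose proof (Hpsi_pos (a i)). lra.
     rewrite sumR_lin. fold S. rewrite <- Ht0. ring. }
 right.
 assert (Hth_eq : (NR - 2) * th = (NR - 2) * m + D0 - T) by (unfold th; field; lra).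
 assert (Hth1 : th < 1).
 { assert ((NR - 2) * th < (NR - 2) * 1) by lra. apply (Rmult_lt_reg_l (NR - 2)); lra. }
 assert (Hmth : m <= th) by lra.
 assert (HSth : S <= INR n * th) by (rewrite <- Ht0; apply Rmult_le_compat_l; lra).
 pose (Ei := fun i => if Rle_dec (a i) th then 0 else a i - th).
 pose (Fi := fun i => if Rle_dec (a i) th then th - a i else 0).
 pose (EE := sumR n Ei). pose (FF := sumR n Fi).
 assert (HEE : 0 <= EE).
 { apply sumR_nonneg. intros i Hi. unfold Ei. destruct (Rle_dec (a i) th); lra. }
 assert (HFE : FF = (INR n * th + (-1) * S) + EE).
 { unfold FF, EE, S. rewrite <- sumR_lin, <- sumR_add. apply sumR_ext. intros i Hi.
   unfold Fi, Ei. destruct (Rle_dec (a i) th); ring. }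
 pose (lam := if Req_EM_T FF 0 then 0 else EE / FF).
 assert (Hlam : 0 <= lam <= 1 /\ lam * FF = EE).
 { unfold lam. destruct (Req_EM_T FF 0) as [Z|Z]. split. lra. lra.
   split. split. apply Rmult_le_pos. lra. apply Rlt_le, Rinv_0_lt_compat; lra.
   apply (Rmult_le_reg_r FF). lra. field_simplify; lra. field; auto. }
 pose (b := fun i => if Rle_dec (a i) th then a i + lam * (th - a i) else th).
 assert (Hbsum : sumR n b = S).
 { transitivity (sumR n (fun i => a i + (lam * Fi i + (-1) * Ei i))).
   apply sumR_ext. intros i Hi. unfold b, Fi, Ei. destruct (Rle_dec (a i) th); ring.
   rewrite !sumR_add, !sumR_scal. fold S. fold FF EE. lra. }
 assert (Hbr : forall i, (i < n)%nat -> m <= b i <= th).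
 { intros i Hi. pose proof (Ha i Hi). unfold b. destruct (Rle_dec (a i) th).
   assert (0 <= lam * (th - a i) <= th - a i). { split. apply Rmult_le_pos; lra.
     assert (lam * (th - a i) <= 1 * (th - a i)) by (apply Rmult_le_compat_r; lra). lra. }
   lra. lra. }
 assert (HDenpos : forall z, z <= th -> 0 < Den NR m T z) by (intros z Hz; pose proof (HDen z Hz); lra).
 assert (Hab : forall i, (i < n)%nat -> 0 <= psi (a i) <= pu NR m T (b i)).
 { intros i Hi. pose proof (Ha i Hi). split. pose proof (Hpsi_pos (a i)). lra.
   unfold b. destruct (Rle_dec (a i) th).
   - rewrite Hpsi_eq_pu by lra. apply pu_mono; try lra. apply HDenpos; lra. apply HDenpos.
     assert (lam * (th - a i) <= 1 * (th - a i)) by (apply Rmult_le_compat_r; lra). lra.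
     assert (0 <= lam * (th - a i)) by (apply Rmult_le_pos; lra). lra.
   - rewrite Hpsi_capth by lra. rewrite Hputh. apply Rplus_le_compat_l. apply Rmult_le_compat_r.
     apply Rlt_le, Rinv_0_lt_compat; lra. lra. }
 assert (Hpupos : forall x, m <= x <= th -> 0 <= pu NR m T x).
 { intros x Hx. pose proof (pu_lower NR m T x ltac:(lra) (HDenpos x ltac:(lra)) ltac:(lra)).
   assert (0 <= NR * (NR - 1) / (NR - 2)) by (apply Rmult_le_pos; [nra| apply Rlt_le, Rinv_0_lt_compat; lra]). lra. }
 assert (Hsp1 : forall x y, m <= x <= th -> m <= y <= th -> x + y - m <= th ->
      pu NR m T x * pu NR m T y <= pu NR m T (x + y - m) * pu NR m T m).
 { intros x y Hx Hy Hxy. destruct (Rle_dec x y).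
   - pose proof (pu_two NR m T x y (x - m) ltac:(lra) ltac:(lra) r ltac:(lra) (HDenpos (x - (x - m)) ltac:(lra)) (HDenpos (y + (x - m)) ltac:(lra))).
     replace (x - (x - m)) with m in H by ring. replace (y + (x - m)) with (x + y - m) in H by ring. lra.
   - pose proof (pu_two NR m T y x (y - m) ltac:(lra) ltac:(lra) ltac:(lra) ltac:(lra) (HDenpos (y - (y - m)) ltac:(lra)) (HDenpos (x + (y - m)) ltac:(lra))).
     replace (y - (y - m)) with m in H by ring. replace (x + (y - m)) with (x + y - m) in H by ring. lra. }
 assert (Hsp2 : forall x y, m <= x <= th -> m <= y <= th -> m <= x + y - th ->
      pu NR m T x * pu NR m T y <= pu NR m T th * pu NR m T (x + y - th)).
 { intros x y Hx Hy Hxy. destruct (Rle_dec x y).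
   - pose proof (pu_two NR m T x y (th - y) ltac:(lra) ltac:(lra) r ltac:(lra) (HDenpos (x - (th - y)) ltac:(lra)) (HDenpos (y + (th - y)) ltac:(lra))).
     replace (x - (th - y)) with (x + y - th) in H by ring. replace (y + (th - y)) with th in H by ring. lra.
   - pose proof (pu_two NR m T y x (th - x) ltac:(lra) ltac:(lra) ltac:(lra) ltac:(lra) (HDenpos (y - (th - x)) ltac:(lra)) (HDenpos (x + (th - x)) ltac:(lra))).
     replace (y - (th - x)) with (x + y - th) in H by ring. replace (x + (th - x)) with th in H by ring. lra. }
 assert (Hnn : n = Datatypes.S (N - J - 1)) by (unfold n; lia).
 destruct (spread (pu NR m T) m th Hmth Hpupos Hsp1 Hsp2 (N - J - 1) b) as (t & p & q & Hpq & Ht & Hts & Htp).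
 { intros i Hi. apply Hbr. rewrite Hnn. exact Hi. }
 rewrite <- Hnn in Hts, Htp. rewrite Hbsum in Hts.
 assert (Hmain : f9 eps N J m M c a <= P * (pu NR m T t * pu NR m T m ^ p * pu NR m T th ^ q)).
 { rewrite F0. apply Rmult_le_compat_l. lra. eapply Rle_trans; [|exact Htp]. apply prodR_le. exact Hab. }
 assert (HpR : INR (N - J) - INR q - 1 = INR p).
 { change (INR (N - J)) with (INR n). rewrite Hnn, S_INR. rewrite <- Hpq, plus_INR. ring. }
 assert (Hq2 : 0 < NR + INR q - 2) by (pose proof (pos_INR q); lra).
 assert (Hnum : (NR - 1) * (M + m) - (JR * c + INR p * m + t) = th * (NR + INR q - 2)).
 { unfold D0, T, A in Hth_eq. lra. }
 assert (HB : B9 N J m M c q t = th).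
 { unfold B9. fold NR JR. rewrite HpR, Hnum. field. lra. }
 assert (HS9 : S9 N J m M c q t = T).
 { unfold S9. fold NR JR. rewrite HB, HpR. unfold T, A. lra. }
 exists q, t. split. unfold n in Hnn; lia. split. split. lra.
 { unfold U9. fold NR JR. rewrite HpR.
   replace ((NR - 1) * (M + m) - (JR * c + INR p * m)) with (th * (NR + INR q - 2) + t) by lra.
   apply (Rmult_le_reg_r (NR + INR q - 1)). lra. field_simplify; [|lra].
   assert (0 <= (NR + INR q - 2) * (th - t)) by (apply Rmult_le_pos; lra). nra. }
 eapply Rle_trans. exact Hmain. apply Req_le.
 unfold fk9. fold NR JR E. rewrite HS9, HB.
 replace (Z.of_nat (N - J) - Z.of_nat q - 1)%Z with (Z.of_nat p) by lia.
 rewrite <- pow_powerRZ.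
 replace (pu NR m T m) with (NR + (1 - m) / (1 - T / NR)) by (unfold pu; f_equal; f_equal; f_equal; f_equal; ring).
 rewrite Hputh. unfold D, D0. unfold P, T, A.
 replace (m + JR * c + S) with (m + (JR * c + S)) by ring. unfold pu. ring.
Qed.
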